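(* Let $\{(\mathbf{x}^k,\mathbf{y}^k,\boldsymbol{\gamma}^k)\}$ be generated by the two-block linearized ADMM below, applied under the standing assumptions (i)–(iv) below. Then for every $k\ge0$, $$L_\beta(\mathbf{x}^{k+1},\mathbf{y}^k,\boldsymbol{\gamma}^k)-L_\beta(\mathbf{x}^{k+1},\mathbf{y}^{k+1},\boldsymbol{\gamma}^k)\ge C_1\|\mathbf{y}^k-\mathbf{y}^{k+1}\|^2,$$ where $C_1=\frac{2L_y-L_w}{2}$ and $L_w=L_g+L_h$.
   Context: Problem: minimize $g(\mathbf{x},\mathbf{y})+f(\mathbf{x})+h(\mathbf{y})$ s.t. $\mathbf{A}\mathbf{x}+\mathbf{B}\mathbf{y}=\mathbf{0}$, $\mathbf{x}\in\mathbb{R}^p$, $\mathbf{y}\in\mathbb{R}^q$, $\mathbf{A}\in\mathbb{R}^{n\times p}$, $\mathbf{B}\in\mathbb{R}^{n\times q}$. Standing assumptions: (i) $\nabla h$ is $L_h$-Lipschitz; (ii) $\nabla g$ is $L_g$-Lipschitz; (iii) $g+f+h$ is lower bounded on the feasible set $\{\mathbf{A}\mathbf{x}+\mathbf{B}\mathbf{y}=\mathbf{0}\}$ and coercive w.r.t. $\mathbf{y}$ over it; (iv) $\mathbf{B}$ has full column rank and $\mathrm{Im}(\mathbf{A})\subset\mathrm{Im}(\mathbf{B})$. $L_\beta(\mathbf{x},\mathbf{y},\boldsymbol{\gamma})=g(\mathbf{x},\mathbf{y})+f(\mathbf{x})+h(\mathbf{y})+\langle\boldsymbol{\gamma},\mathbf{A}\mathbf{x}+\mathbf{B}\mathbf{y}\rangle+\frac{\beta}{2}\|\mathbf{A}\mathbf{x}+\mathbf{B}\mathbf{y}\|^2$.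 Algorithm (parameters $L_x,L_y,\beta>0$): $\mathbf{x}^{k+1}\in\arg\min\bar f^k$, $\mathbf{y}^{k+1}=\arg\min\bar h^k$, $\boldsymbol{\gamma}^{k+1}=\boldsymbol{\gamma}^k+\beta(\mathbf{A}\mathbf{x}^{k+1}+\mathbf{B}\mathbf{y}^{k+1})$, where $\bar f^k(\mathbf{x})=f(\mathbf{x})+\langle\boldsymbol{\gamma}^k,\mathbf{A}\mathbf{x}\rangle+\frac{L_x}{2}\|\mathbf{x}-\mathbf{x}^k\|^2+\langle\mathbf{x}-\mathbf{x}^k,\nabla_{\mathbf{x}}g(\mathbf{x}^k,\mathbf{y}^k)+\beta\mathbf{A}^{\rm T}(\mathbf{A}\mathbf{x}^k+\mathbf{B}\mathbf{y}^k)\rangle$, $\bar h^k(\mathbf{y})=\langle\boldsymbol{\gamma}^k,\mathbf{B}\mathbf{y}\rangle+\frac{L_y}{2}\|\mathbf{y}-\mathbf{y}^k\|^2+\frac{\beta}{2}\|\mathbf{A}\mathbf{x}^{k+1}+\mathbf{B}\mathbf{y}\|^2+\langle\mathbf{y}-\mathbf{y}^k,\nabla_{\mathbf{y}}g(\mathbf{x}^{k+1},\mathbf{y}^k)+\nabla h(\mathbf{y}^k)\rangle$. *)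

(* Defs.v *)
From HB Require Import structures.
From mathcomp Require Import all_boot all_order all_algebra.
From mathcomp Require Import all_classical all_reals all_analysis.
Set Implicit Arguments. Unset Strict Implicit. Unset Printing Implicit Defensive.
Import Order.TTheory GRing.Theory Num.Theory.
Import numFieldNormedType.Exports.
Local Open Scope ring_scope.

Definition dotv (R : realType) (m : nat) (u v : 'cV[R]_m) : R :=
  \sum_(i < m) u i 0 * v i 0.

Definition enorm (R : realType) (m : nat) (v : 'cV[R]_m) : R :=
  Num.sqrt (dotv v v).

Definition is_gradient (R : realType) (m : nat)
    (f : 'cV[R]_m -> R) (gf : 'cV[R]_m -> 'cV[R]_m) : Prop :=
  forall z, differentiable f z /\ forall v, ('d f z : 'cV[R]_m -> R) v = dotv (gf z) v.

Definition lipschitz_e (R : realType) (m k : nat)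
    (F : 'cV[R]_m -> 'cV[R]_k) (L : R) : Prop :=
  forall z1 z2, enorm (F z1 - F z2) <= L * enorm (z1 - z2).

(* The augmented Lagrangian, with g(x,y) := G (col_mx x y). *)
Definition Lbeta (R : realType) (n p q : nat)
    (G : 'cV[R]_(p + q) -> R) (f : 'cV[R]_p -> R) (h : 'cV[R]_q -> R)
    (A : 'M[R]_(n, p)) (B : 'M[R]_(n, q)) (beta : R)
    (x : 'cV[R]_p) (y : 'cV[R]_q) (gam : 'cV[R]_n) : R :=
  G (col_mx x y) + f x + h y + dotv gam (A *m x + B *m y)
  + beta / 2 * enorm (A *m x + B *m y) ^+ 2.

(* Linearized x-subproblem objective \bar f^k. gG is the gradient of G, so
   grad_x g(x,y) = usubmx (gG (col_mx x y)). *)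
Definition fbar (R : realType) (n p q : nat)
    (gG : 'cV[R]_(p + q) -> 'cV[R]_(p + q)) (f : 'cV[R]_p -> R)
    (A : 'M[R]_(n, p)) (B : 'M[R]_(n, q)) (beta Lx : R)
    (xk : 'cV[R]_p) (yk : 'cV[R]_q) (gk : 'cV[R]_n) (x : 'cV[R]_p) : R :=
  f x + dotv gk (A *m x) + Lx / 2 * enorm (x - xk) ^+ 2
  + dotv (x - xk) (usubmx (gG (col_mx xk yk)) + beta *: (A^T *m (A *m xk + B *m yk))).

Definition hbar (R : realType) (n p q : nat)
    (gG : 'cV[R]_(p + q) -> 'cV[R]_(p + q)) (gh : 'cV[R]_q -> 'cV[R]_q)
    (A : 'M[R]_(n, p)) (B : 'M[R]_(n, q)) (beta Ly : R)
    (xk1 : 'cV[R]_p) (yk : 'cV[R]_q) (gk : 'cV[R]_n) (y : 'cV[R]_q) : R :=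
  dotv gk (B *m y) + Ly / 2 * enorm (y - yk) ^+ 2
  + beta / 2 * enorm (A *m xk1 + B *m y) ^+ 2
  + dotv (y - yk) (dsubmx (gG (col_mx xk1 yk)) + gh yk).

(* Main.v *)
Require Import Defs.
From HB Require Import structures.
From mathcomp Require Import all_boot all_order all_algebra.
From mathcomp Require Import all_classical all_reals all_analysis.
From mathcomp Require Import ring lra.
Import Order.TTheory GRing.Theory Num.Theory.
Set Implicit Arguments. Unset Strict Implicit.
Local Open Scope ring_scope.

Lemma final_arith (R : realFieldType) (Ly Lg Lh E G0 G1 h0 h1 dg dh g0 g1 b0 b1 f a : R) :
 G1 <= G0 + dg + Lg/2*E -> h1 <= h0 + dh + Lh/2*E ->
 g1 + Ly/2*E + b1 + (dg + dh) + Ly/2*E <= g0 + b0 ->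
 (2*Ly - (Lg+Lh))/2*E <= G0 + f + h0 + (a + g0) + b0 - (G1 + f + h1 + (a + g1) + b1).
Proof.
move=> h1' h2' h3'.
have -> : (2*Ly - (Lg+Lh))/2*E = Ly/2*E + Ly/2*E - Lg/2*E - Lh/2*E.
  rewrite !mulrBl !mulrDl opprD addrA; congr (_ - _ - _).
  by rewrite !mul1r.
lra.
Qed.

Lemma quad_arith (R : realFieldType) (al Q : R) :
  0 <= Q -> (forall s, 0 <= s * al + s ^+ 2 * Q) -> al = 0.
Proof.
move=> Q0 H.
have Q1 : Q + 1 != 0 by rewrite gt_eqF // ltr_wpDl.
have := H (- al / (Q + 1)).
have -> : - al / (Q + 1) * al + (- al / (Q + 1)) ^+ 2 * Q = - (al ^+ 2 / (Q + 1) ^+ 2).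
  by field.
rewrite oppr_ge0 => H2.
have H3 : al ^+ 2 / (Q + 1) ^+ 2 = 0.
  by apply/eqP; rewrite eq_le H2 divr_ge0 ?sqr_ge0.
move/eqP: H3; rewrite mulf_eq0 invr_eq0 !sqrf_eq0 (negbTE Q1) orbF.
by move/eqP.
Qed.

Lemma quad_poly (R : realFieldType) (L b P E UB BU V W UU g : R) :
  let F := fun s => g + s * P + L / 2 * ((s - 1) * ((s - 1) * E))
     + b / 2 * ((UU + s * UB) + (s * BU + s * (s * V))) + (s - 1) * W in
  0 <= L -> 0 <= b -> 0 <= E -> 0 <= V -> (forall s, F 0 <= F s) -> F 0 + L / 2 * E <= F 1.
Proof.
move=> F L0 b0 E0 V0 H.
set al := P - 2 * (L / 2) * E + b / 2 * (UB + BU) + W.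
set Q := L / 2 * E + b / 2 * V.
have HQ : 0 <= Q by rewrite /Q addr_ge0 // mulr_ge0 // divr_ge0.
have id : forall s, F s - F 0 = s * al + s ^+ 2 * Q by move=> s; rewrite /F /al /Q; ring.
have al0 : al = 0.
  apply: (@quad_arith _ al Q HQ) => s; rewrite -id subr_ge0; exact: H.
have := id 1; rewrite al0 mulr0 add0r expr1n mul1r /Q => e.
have : 0 <= b / 2 * V by rewrite mulr_ge0 // divr_ge0.
lra.
Qed.

Import numFieldNormedType.Exports.

Section Dot.
Variables (R : realType) (m : nat).
Implicit Types u v w : 'cV[R]_m.

Lemma dotvC u v : dotv u v = dotv v u.
Proof. by apply: eq_bigr => i _; rewrite mulrC. Qed.
Lemma dotvDl u v w : dotv (u + v) w = dotv u w + dotv v w.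
Proof. by rewrite /dotv -big_split; apply: eq_bigr => i _; rewrite !mxE mulrDl. Qed.
Lemma dotvDr u v w : dotv w (u + v) = dotv w u + dotv w v.
Proof. by rewrite dotvC dotvDl !(dotvC w). Qed.
Lemma dotvZl (a : R) u v : dotv (a *: u) v = a * dotv u v.
Proof. by rewrite /dotv mulr_sumr; apply: eq_bigr => i _; rewrite !mxE mulrA. Qed.
Lemma dotvZr (a : R) u v : dotv u (a *: v) = a * dotv u v.
Proof. by rewrite dotvC dotvZl dotvC. Qed.
Lemma dotvNl u v : dotv (- u) v = - dotv u v.
Proof. by rewrite -scaleN1r dotvZl mulN1r. Qed.
Lemma dotvNr u v : dotv u (- v) = - dotv u v.
Proof. by rewrite dotvC dotvNl dotvC. Qed.
Lemma dotvBl u v w : dotv (u - v) w = dotv u w - dotv v w.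
Proof. by rewrite dotvDl dotvNl. Qed.
Lemma dotvBr u v w : dotv w (u - v) = dotv w u - dotv w v.
Proof. by rewrite dotvDr dotvNr. Qed.
Lemma dotv0l v : dotv 0 v = 0.
Proof. by rewrite /dotv big1 // => i _; rewrite mxE mul0r. Qed.
Lemma dotv_ge0 v : 0 <= dotv v v.
Proof. by apply: sumr_ge0 => i _; rewrite -expr2 sqr_ge0. Qed.
Lemma dotv_eq0 v : dotv v v = 0 -> v = 0.
Proof.
move=> /eqP; rewrite /dotv psumr_eq0; last by move=> i _; rewrite -expr2 sqr_ge0.
move=> /allP H; apply/matrixP => i j; rewrite (ord1 j) mxE.
have := H i (mem_index_enum _); rewrite /= mulf_eq0 orbb => /eqP //.
Qed.
Lemma enorm_sq v : enorm v ^+ 2 = dotv v v.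
Proof. by rewrite /enorm sqr_sqrtr // dotv_ge0. Qed.
Lemma enorm_ge0 v : 0 <= enorm v.
Proof. exact: sqrtr_ge0. Qed.
Lemma enormZ (a : R) v : enorm (a *: v) = `|a| * enorm v.
Proof. by rewrite /enorm dotvZl dotvZr mulrA -expr2 sqrtrM ?sqr_ge0 // sqrtr_sqr. Qed.

Lemma CS_sq u v : dotv u v ^+ 2 <= dotv u u * dotv v v.
Proof.
have [->|v0] := eqVneq v 0; first by rewrite !(dotvC _ 0) !dotv0l expr0n /= mulr0.
have vp : 0 < dotv v v.
  by rewrite lt_def dotv_ge0 andbT; apply/eqP => /dotv_eq0; apply/eqP.
set s := dotv u v / dotv v v.
have := dotv_ge0 (u - s *: v).
rewrite dotvBl !dotvBr !dotvZl !dotvZr (dotvC v u) => H.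
have e : s * dotv v v = dotv u v by rewrite /s mulfVK // gt_eqF.
rewrite -subr_ge0.
have -> : dotv u u * dotv v v - dotv u v ^+ 2 =
  dotv v v * (dotv u u - s * dotv u v - (s * dotv u v - s * (s * dotv v v))).
  rewrite e; rewrite /s; field; by rewrite gt_eqF.
by apply: mulr_ge0 => //; apply: ltW.
Qed.

Lemma CS u v : dotv u v <= enorm u * enorm v.
Proof.
rewrite /enorm -sqrtrM ?dotv_ge0 //.
apply: (le_trans (ler_norm _)).
rewrite -sqrtr_sqr ler_sqrt; first exact: CS_sq.
by apply: mulr_ge0; exact: dotv_ge0.
Qed.
End Dot.

Section Descent.
Local Open Scope classical_set_scope.
Lemma line_diff (R : realType) (V : normedModType R) (a d : V) (t : R) :
  differentiable (fun s : R => a + s *: d) t /\ 'd (fun s : R => a + s *: d) t 1 = d.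
Proof.
have H := @is_diff_scalel R _ t d.
have dz : differentiable (fun s : R => s *: d) t by exact: ex_diff.
split; first by apply: differentiableD; first exact: differentiable_cst.
rewrite (diffD (differentiable_cst a t) dz) /=.
by rewrite diff_cst (diff_val) add0r scale1r.
Qed.

Lemma Dpsi (R : realType) (m : nat) (f : 'cV[R]_m -> R) gf (a d : 'cV[R]_m) (t : R) :
  is_gradient f gf ->
  is_derive t 1 (fun s : R => f (a + s *: d)) (dotv (gf (a + t *: d)) d).
Proof.
move=> Hg.
have [dg eg] := @line_diff R _ a d t.
have [df dfv] := Hg (a + t *: d).
have dc : differentiable (f \o (fun s : R => a + s *: d)) t.
  exact: differentiable_comp.
apply: DeriveDef; first exact: diff_derivable.
rewrite (deriveE _ dc) (diff_comp dg df) /=.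
by rewrite eg dfv.
Qed.

Lemma Dpoly (R : realType) (c K t : R) :
  is_derive t 1 (fun s : R => c * s + K * (s * s)) (c + K * (2 * t)).
Proof.
have -> : (fun s : R => c * s + K * (s * s)) = (c \*: (@id R)) + (K \*: ((@id R) * (@id R))).
  by apply/funext => s.
apply: is_derive_eq.
rewrite /= !scaler1 /GRing.scale /=.
lra.
Qed.

Lemma descent (R : realType) (m : nat) (f : 'cV[R]_m -> R) gf (L : R) :
  is_gradient f gf -> lipschitz_e gf L -> forall a b,
  f b <= f a + dotv (gf a) (b - a) + L / 2 * enorm (b - a) ^+ 2.
Proof.
move=> Hg Hl a b.
set d := b - a. set c := dotv (gf a) d. set K := L / 2 * dotv d d.
pose phi := fun s : R => f (a + s *: d) - (c * s + K * (s * s)).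
have Dphi : forall t : R, is_derive t (1 : R) phi (dotv (gf (a + t *: d)) d - (c + K * (2 * t))).
  move=> t.
  have -> : phi = (fun s : R => f (a + s *: d)) - (fun s : R => c * s + K * (s * s)).
    by apply/funext => s.
  apply: is_deriveB; [exact: Dpsi | exact: Dpoly].
have der : forall t : R, t \in `]0, 1[%R -> derivable phi t 1.
  by move=> t _; exact: (@ex_derive _ _ _ _ _ _ _ (Dphi t)).
have cont : {within `[0, 1], continuous phi}.
  by apply: derivable_within_continuous => t _; exact: (@ex_derive _ _ _ _ _ _ _ (Dphi t)).
have dle : forall t : R, t \in `]0, 1[%R -> derive1 phi t <= 0.
  move=> t; rewrite in_itv /= => /andP[t0 t1].
  rewrite derive1E (@derive_val _ _ _ _ _ _ _ (Dphi t)).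
  have e1 : dotv (gf (a + t *: d)) d - c = dotv (gf (a + t *: d) - gf a) d.
    by rewrite dotvBl.
  have h1 := CS (gf (a + t *: d) - gf a) d.
  have h2 := Hl (a + t *: d) a.
  have e2 : a + t *: d - a = t *: d by rewrite addrC addKr.
  rewrite e2 enormZ ger0_norm in h2; last exact: ltW.
  have h3 : enorm (gf (a + t *: d) - gf a) * enorm d <= L * (t * enorm d) * enorm d.
    by apply: ler_wpM2r; [exact: enorm_ge0 | exact: h2].
  have e3 : enorm d * enorm d = dotv d d by rewrite -expr2 enorm_sq.
  have e4 : L * (t * enorm d) * enorm d = L * t * dotv d d by rewrite -e3; ring.
  rewrite /K. lra.
have := ler0_derive1_le_cc der dle cont.
move=> /(_ 1 0); rewrite !in_itv /= ler01 !lexx /= => /(_ isT isT isT).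
have eb : a + 1 *: d = b by rewrite scale1r /d addrC subrK.
have ea : a + 0 *: d = a by rewrite scale0r addr0.
rewrite /phi eb ea.
rewrite enorm_sq -/d /K.
lra.
Qed.

End Descent.

Lemma dotv_col (R : realType) (p q : nat) (u1 v1 : 'cV[R]_p) (u2 v2 : 'cV[R]_q) :
  dotv (col_mx u1 u2) (col_mx v1 v2) = dotv u1 v1 + dotv u2 v2.
Proof.
rewrite /dotv big_split_ord; congr (_ + _); apply: eq_bigr => i _.
  by rewrite !col_mxEu.
by rewrite !col_mxEd.
Qed.

Lemma enorm_sym (R : realType) (m : nat) (u v : 'cV[R]_m) : enorm (u - v) = enorm (v - u).
Proof. by rewrite /enorm -opprB dotvNl dotvNr opprK. Qed.

Lemma enorm_col0 (R : realType) (p q : nat) (v : 'cV[R]_q) :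
  enorm (col_mx (0 : 'cV[R]_p) v) = enorm v.
Proof. by rewrite /enorm dotv_col dotv0l add0r. Qed.

Lemma col_sub (R : realType) (p q : nat) (x : 'cV[R]_p) (y1 y0 : 'cV[R]_q) :
  col_mx x y1 - col_mx x y0 = col_mx 0 (y1 - y0).
Proof. by rewrite opp_col_mx add_col_mx subrr. Qed.

Lemma hbar_strong (R : realType) (n p q : nat) gG gh (A : 'M[R]_(n, p)) (B : 'M[R]_(n, q))
    (beta Ly : R) x1 yk gk y1 :
  0 <= beta -> 0 <= Ly ->
  (forall y0, hbar gG gh A B beta Ly x1 yk gk y1 <= hbar gG gh A B beta Ly x1 yk gk y0) ->
  hbar gG gh A B beta Ly x1 yk gk y1 + Ly / 2 * enorm (yk - y1) ^+ 2
    <= hbar gG gh A B beta Ly x1 yk gk yk.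
Proof.
move=> b0 L0 Hmin.
set w := dsubmx (gG (col_mx x1 yk)) + gh yk.
set a := A *m x1.
set e := yk - y1.
set Be := B *m e. set u := a + B *m y1.
have HF : forall s : R, hbar gG gh A B beta Ly x1 yk gk (y1 + s *: e) =
   dotv gk (B *m y1) + s * dotv gk Be + Ly / 2 * ((s - 1) * ((s - 1) * dotv e e))
     + beta / 2 * ((dotv u u + s * dotv u Be) + (s * dotv Be u + s * (s * dotv Be Be)))
     + (s - 1) * dotv e w.
  move=> s.
  have e1 : y1 + s *: e - yk = (s - 1) *: e.
    by rewrite scalerBl scale1r {2}/e opprB addrAC addrC.
  have e2 : a + B *m (y1 + s *: e) = u + s *: Be.
    by rewrite mulmxDr scalemxAr /u /Be addrA.
  have e3 : B *m (y1 + s *: e) = B *m y1 + s *: Be.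
    by rewrite mulmxDr scalemxAr.
  rewrite /hbar -/w -/a e1 e2 e3.
  clearbody w u Be e.
  rewrite !enorm_sq !dotvDl !dotvDr !dotvZl !dotvZr.
  by [].
have H0 := HF 0. rewrite scale0r addr0 in H0.
have ey : y1 + 1 *: e = yk by rewrite scale1r /e addrC subrK.
have H1 := HF 1. rewrite ey in H1.
rewrite H0 H1 enorm_sq.
have := @quad_poly R Ly beta (dotv gk Be) (dotv e e) (dotv u Be) (dotv Be u) (dotv Be Be)
  (dotv e w) (dotv u u) (dotv gk (B *m y1)) L0 b0 (dotv_ge0 e) (dotv_ge0 Be).
move=> /=; apply => s.
by rewrite -H0 -HF.
Qed.

Theorem lemma6 (R : realType) (n p q : nat)
    (G : 'cV[R]_(p + q) -> R) (gG : 'cV[R]_(p + q) -> 'cV[R]_(p + q))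
    (f : 'cV[R]_p -> R) (h : 'cV[R]_q -> R) (gh : 'cV[R]_q -> 'cV[R]_q)
    (A : 'M[R]_(n, p)) (B : 'M[R]_(n, q))
    (Lg Lh Lx Ly beta : R)
    (x : nat -> 'cV[R]_p) (y : nat -> 'cV[R]_q) (gam : nat -> 'cV[R]_n) :
  is_gradient h gh -> lipschitz_e gh Lh ->
  is_gradient G gG -> lipschitz_e gG Lg ->
  (exists M : R, forall x0 y0, A *m x0 + B *m y0 = 0 ->
       M <= G (col_mx x0 y0) + f x0 + h y0) ->
  (forall M : R, exists r : R, forall x0 y0, A *m x0 + B *m y0 = 0 ->
       r < enorm y0 -> M < G (col_mx x0 y0) + f x0 + h y0) ->
  \rank B = q ->
  (forall x0 : 'cV[R]_p, exists y0 : 'cV[R]_q, A *m x0 = B *m y0) ->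
  0 < Lx -> 0 < Ly -> 0 < beta ->
  (forall k x0, fbar gG f A B beta Lx (x k) (y k) (gam k) (x k.+1)
                <= fbar gG f A B beta Lx (x k) (y k) (gam k) x0) ->
  (forall k y0, hbar gG gh A B beta Ly (x k.+1) (y k) (gam k) (y k.+1)
                <= hbar gG gh A B beta Ly (x k.+1) (y k) (gam k) y0) ->
  (forall k, gam k.+1 = gam k + beta *: (A *m x k.+1 + B *m y k.+1)) ->
  forall k : nat,
    Lbeta G f h A B beta (x k.+1) (y k) (gam k)
    - Lbeta G f h A B beta (x k.+1) (y k.+1) (gam k)
    >= (2 * Ly - (Lg + Lh)) / 2 * enorm (y k - y k.+1) ^+ 2.
Proof.
move=> Hh Hlh HG HlG _ _ _ _ _ HLy Hbeta _ Hhb _ k.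
have hb := hbar_strong (ltW Hbeta) (ltW HLy) (Hhb k).
rewrite /hbar subrr (enorm_sq (0 : 'cV[R]_q)) !dotv0l mulr0 !addr0 in hb.
set x1 := x k.+1 in hb *; set yk := y k in hb *; set y1 := y k.+1 in hb *; set gk := gam k in hb *.
have dG := descent HG HlG (col_mx x1 yk) (col_mx x1 y1).
have dh := descent Hh Hlh yk y1.
rewrite col_sub enorm_col0 -{1}(vsubmxK (gG (col_mx x1 yk))) dotv_col (dotvC _ 0) dotv0l add0r in dG.
rewrite dotvDr (dotvC (y1 - yk)) (dotvC (y1 - yk)) (enorm_sym yk y1) in hb.
rewrite /Lbeta !dotvDr enorm_sym.
exact: (@final_arith _ _ _ _ _ _ _ _ _ _ _ _ _ _ _ (f x1) (dotv gk (A *m x1)) dG dh hb).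
Qed.
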